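(* Let $\mathbb{X}$ be a finite set and let $G=(G(x,y))_{x,y\in\mathbb{X}}$ be a real symmetric, conditionally positive semi-definite matrix which has an equilibrium measure $\nu^*\in\mathcal{P}_+$. Let $\{a_k\}_{k=0}^\infty$ be a Leja sequence with respect to $G$, and for $n\ge 1$ let $\sigma_n=\frac1n\sum_{j=0}^{n-1}\delta_{a_j}$. Let $M=\max_{x\in\mathbb{X}}|G(x,x)|$. Then for every integer $n\ge 1$, $$G(\sigma_n-\nu^*,\sigma_n-\nu^* )\le \frac{1}{n}\left(M-G(\nu^*,\nu^* )\right).$$ Moreover, any weak-star limit of a subsequence of $\{\sigma_n\}$ is also an equilibrium measure for $G$.
   Context: Functions $\nu:\mathbb{X}\to\mathbb{R}$ are identified with measures/vectors on $\mathbb{X}$; $\delta_a$ is the Dirac measure at $a$. For such $\mu,\nu$ write $G(x,\nu)=\sum_{y}G(x,y)\nu(y)$ and $G(\mu,\nu)=\sum_{x,y}G(x,y)\mu(x)\nu(y)$. $\mathcal{P}$ is the set of probability measures on $\mathbb{X}$, and $\mathcal{P}_+$ the set of $\nu\in\mathcal{P}$ with $\nu(x)>0$ for all $x$. $G$ is conditionally positive semi-definite if $v^\intercal Gv\ge 0$ whenever $\sum_x v(x)=0$. A measure $\nu^*\in\mathcal{P}$ is an equilibrium measure for $G$ if $G(\nu^*,\nu^* )=\min_{\nu\in\mathcal{P}}G(\nu,\nu)$. A Leja sequence with respect to $G$ is a sequence $\{a_k\}_{k=0}^\infty$ in $\mathbb{X}$ ($a_0$ arbitrary) such that for each $k\ge1$,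 $a_k$ minimizes $x\mapsto\sum_{j=0}^{k-1}G(x,a_j)$ over $\mathbb{X}$ (ties broken arbitrarily; points may repeat). *)

(* Defs.v *)
From HB Require Import structures.
From mathcomp Require Import all_boot all_order all_algebra.
From mathcomp Require Import all_classical all_reals all_analysis.
Set Implicit Arguments. Unset Strict Implicit. Unset Printing Implicit Defensive.
Import Order.TTheory GRing.Theory Num.Theory.
Local Open Scope ring_scope.

Section Defs.
Variables (R : realType) (T : finType).

Definition Gpt (G : T -> T -> R) (x : T) (nu : T -> R) : R :=
  \sum_(y : T) G x y * nu y.

Definition Gform (G : T -> T -> R) (mu nu : T -> R) : R :=
  \sum_(x : T) \sum_(y : T) G x y * mu x * nu y.

Definition is_prob (nu : T -> R) : Prop :=
  (forall x, 0 <= nu x) /\ \sum_(x : T) nu x = 1.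

Definition is_prob_pos (nu : T -> R) : Prop :=
  (forall x, 0 < nu x) /\ \sum_(x : T) nu x = 1.

Definition symmetric_kernel (G : T -> T -> R) : Prop :=
  forall x y, G x y = G y x.

Definition cond_psd (G : T -> T -> R) : Prop :=
  forall v : T -> R, \sum_(x : T) v x = 0 -> 0 <= Gform G v v.

Definition equilibrium (G : T -> T -> R) (nu : T -> R) : Prop :=
  is_prob nu /\ forall mu, is_prob mu -> Gform G nu nu <= Gform G mu mu.

Definition leja (G : T -> T -> R) (a : nat -> T) : Prop :=
  forall k : nat, (0 < k)%N ->
    forall x : T, \sum_(j < k) G (a k) (a j) <= \sum_(j < k) G x (a j).

Definition dirac_pt (a : T) : T -> R := fun y => (a == y)%:R.

Definition emp_meas (a : nat -> T) (n : nat) : T -> R :=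
  fun y => n%:R^-1 * \sum_(j < n) dirac_pt (a j) y.

Definition diag_max (G : T -> T -> R) : R :=
  \big[Num.max/0]_(x : T) `|G x x|.

End Defs.

(* Main.v *)
Require Import Defs.
From HB Require Import structures.
From mathcomp Require Import all_boot all_order all_algebra.
From mathcomp Require Import all_classical all_reals all_analysis.
From mathcomp Require Import ring lra.
Import Order.TTheory GRing.Theory Num.Theory numFieldNormedType.Exports.
Local Open Scope classical_set_scope.
Local Open Scope ring_scope.

Section Helpers.
Variables (R : realType) (T : finType) (G : T -> T -> R).

Lemma GformE f h : Gform G f h = \sum_x f x * Gpt G x h.
Proof.
rewrite /Gform /Gpt; apply: eq_bigr => x _; rewrite mulr_sumr.
by apply: eq_bigr => y _; ring.
Qed.

Lemma GformDl f g h :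
  Gform G (fun z => f z + g z) h = Gform G f h + Gform G g h.
Proof.
rewrite /Gform -big_split; apply: eq_bigr => x _; rewrite -big_split.
by apply: eq_bigr => y _ /=; ring.
Qed.

Lemma GformDr f g h :
  Gform G h (fun z => f z + g z) = Gform G h f + Gform G h g.
Proof.
rewrite /Gform -big_split; apply: eq_bigr => x _; rewrite -big_split.
by apply: eq_bigr => y _ /=; ring.
Qed.

Lemma GformBl f g h :
  Gform G (fun z => f z - g z) h = Gform G f h - Gform G g h.
Proof.
rewrite /Gform -sumrB; apply: eq_bigr => x _; rewrite -sumrB.
by apply: eq_bigr => y _ /=; ring.
Qed.

Lemma GformBr f g h :
  Gform G h (fun z => f z - g z) = Gform G h f - Gform G h g.
Proof.
rewrite /Gform -sumrB; apply: eq_bigr => x _; rewrite -sumrB.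
by apply: eq_bigr => y _ /=; ring.
Qed.

Lemma GformZl c f h : Gform G (fun z => c * f z) h = c * Gform G f h.
Proof.
rewrite /Gform mulr_sumr; apply: eq_bigr => x _; rewrite mulr_sumr.
by apply: eq_bigr => y _ /=; ring.
Qed.

Lemma GformZr c f h : Gform G h (fun z => c * f z) = c * Gform G h f.
Proof.
rewrite /Gform mulr_sumr; apply: eq_bigr => x _; rewrite mulr_sumr.
by apply: eq_bigr => y _ /=; ring.
Qed.

Lemma Gform_sym f h : symmetric_kernel G -> Gform G f h = Gform G h f.
Proof.
move=> sG; rewrite /Gform exchange_big; apply: eq_bigr => x _.
by apply: eq_bigr => y _; rewrite sG; ring.
Qed.

Lemma sum_dirac (x : T) (F : T -> R) : \sum_z dirac_pt R x z * F z = F x.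
Proof.
rewrite (bigD1 x) //= big1 => [|z zx]; first by rewrite /dirac_pt eqxx mul1r addr0.
by rewrite /dirac_pt eq_sym (negbTE zx) mul0r.
Qed.

Lemma sum_dirac_r (x : T) (F : T -> R) : \sum_z F z * dirac_pt R x z = F x.
Proof. by rewrite -(sum_dirac x F); apply: eq_bigr => z _; rewrite mulrC. Qed.

Lemma sum_sum_dirac (a : nat -> T) n (F : T -> R) :
  \sum_x (\sum_(j < n) dirac_pt R (a j) x) * F x = \sum_(j < n) F (a j).
Proof.
under eq_bigr do rewrite mulr_suml.
rewrite (exchange_big_dep xpredT) //=.
by apply: eq_bigr => j _; rewrite sum_dirac.
Qed.

Lemma Gform_emp_l a n h :
  Gform G (emp_meas R a n) h = n%:R^-1 * \sum_(j < n) Gpt G (a j) h.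
Proof.
rewrite GformE /emp_meas -(sum_sum_dirac a n (fun x => Gpt G x h)) mulr_sumr.
by apply: eq_bigr => x _; rewrite mulrA.
Qed.

Lemma Gpt_emp x a n :
  Gpt G x (emp_meas R a n) = n%:R^-1 * \sum_(j < n) G x (a j).
Proof.
rewrite /Gpt /emp_meas -(sum_sum_dirac a n (fun y => G x y)) mulr_sumr.
by apply: eq_bigr => y _; ring.
Qed.

Lemma sum_emp (a : nat -> T) n : (1 <= n)%N -> \sum_x emp_meas R a n x = 1.
Proof.
move=> n1; rewrite /emp_meas -mulr_sumr.
rewrite (exchange_big_dep xpredT) //=.
have -> : \sum_(i < n) \sum_x dirac_pt R (a i) x = \sum_(i < n) 1.
  apply: eq_bigr => i _; rewrite -[RHS](sum_dirac (a i) (fun=> 1)).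
  by apply: eq_bigr => z _; rewrite mulr1.
by rewrite sumr_const card_ord mulVf // pnatr_eq0 -lt0n.
Qed.

Lemma sum_dirac1 (x : T) : \sum_z dirac_pt R x z = 1.
Proof.
rewrite -[RHS](sum_dirac x (fun=> 1)).
by apply: eq_bigr => z _; rewrite mulr1.
Qed.

Lemma Gform_dirac_l x h : Gform G (dirac_pt R x) h = Gpt G x h.
Proof. by rewrite GformE sum_dirac. Qed.

Lemma pot_le (nu : T -> R) : symmetric_kernel G ->
  is_prob_pos nu -> equilibrium G nu -> forall x y, Gpt G x nu <= Gpt G y nu.
Proof.
move=> sG [nupos nusum] [_ eq] x y.
have [->|xy] := eqVneq x y; first by [].
rewrite -subr_le0; set d := Gpt G x nu - Gpt G y nu.
rewrite leNgt; apply/negP => d0.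
set v := fun z => dirac_pt R y z - dirac_pt R x z.
set c := Gform G v v.
set e := d / (`|c| + 1).
have c1 : 0 < `|c| + 1 by rewrite ltr_wpDl.
have e0 : 0 < e by rewrite divr_gt0.
have ed : e * (`|c| + 1) = d by rewrite /e mulfVK // gt_eqF.
set t := Num.min (nu x) e.
have t0 : 0 < t by rewrite lt_min nupos e0.
have tnx : t <= nu x by rewrite ge_min lexx.
have te : t <= e by rewrite ge_min lexx orbT.
set mu := fun z => nu z + t * v z.
have vnu : Gform G v nu = - d.
  by rewrite /v GformBl !Gform_dirac_l /d opprB.
have nuv : Gform G nu v = - d by rewrite Gform_sym.
have Emu : Gform G mu mu = Gform G nu nu + t * (-d) + t * (-d) + t * t * c.
  rewrite /mu GformDl !GformDr !GformZl !GformZr vnu nuv /c; ring.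
have pmu : is_prob mu.
  split.
    move=> z; rewrite /mu /v /dirac_pt.
    have [->|zx] := eqVneq z x.
      by rewrite (eq_sym y x) (negbTE xy) /=; lra.
    rewrite subr0.
    by apply: addr_ge0; [exact: ltW|]; apply: mulr_ge0; [exact: ltW|case: (_ == _)].
  rewrite /mu big_split /= -mulr_sumr /v sumrB !sum_dirac1 nusum; ring.
have := eq _ pmu; rewrite Emu.
have cc : c <= `|c| by exact: ler_norm.
have c0 : 0 <= `|c| by [].
have h1 : t * c <= t * `|c| by rewrite ler_wpM2l // ltW.
have h2 : t * `|c| <= e * `|c| by rewrite ler_wpM2r.
have h4 : t * c <= d by move: ed; nra.
have h3 : t * (t * c) <= t * d by rewrite ler_wpM2l // ltW.
have h5 : 0 < t * d by rewrite mulr_gt0.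
rewrite mulrA in h3; lra.
Qed.

Lemma pot_const (nu : T -> R) : symmetric_kernel G ->
  is_prob_pos nu -> equilibrium G nu -> forall x, Gpt G x nu = Gform G nu nu.
Proof.
move=> sG pp eq x.
have hc : forall y, Gpt G y nu = Gpt G x nu.
  by move=> y; apply/le_anti; rewrite !pot_le.
case: pp => _ nusum.
rewrite GformE; under eq_bigr do rewrite hc.
by rewrite -mulr_suml nusum mul1r.
Qed.


Lemma diag_le x : G x x <= diag_max G.
Proof.
apply: le_trans (ler_norm _) _.
by rewrite /diag_max (bigD1 x) //= le_max lexx.
Qed.

Definition SS (a : nat -> T) n := \sum_(i < n) \sum_(j < n) G (a i) (a j).

Lemma SS_rec a n : symmetric_kernel G ->
  SS a n.+1 = SS a n + 2 * \sum_(j < n) G (a n) (a j) + G (a n) (a n).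
Proof.
move=> sG; rewrite /SS big_ord_recr /=.
under eq_bigr do rewrite big_ord_recr /=.
rewrite big_split /= big_ord_recr /=.
under [\sum_(i < n) G (a i) (a n)]eq_bigr do rewrite sG.
ring.
Qed.

Lemma U_le (nu : T -> R) a n : symmetric_kernel G ->
  is_prob_pos nu -> equilibrium G nu -> leja G a ->
  \sum_(j < n) G (a n) (a j) <= n%:R * Gform G nu nu.
Proof.
move=> sG pp eq lj.
case: n => [|n]; first by rewrite big_ord0 mul0r.
have := lj n.+1 isT => hmin.
case: (pp) => nupos nusum.
set U := \sum_(j < n.+1) G (a n.+1) (a j).
have -> : U = \sum_x nu x * U by rewrite -mulr_suml nusum mul1r.
apply: (@le_trans _ _ (\sum_x nu x * \sum_(j < n.+1) G x (a j))).
  by apply: ler_sum => x _; rewrite ler_wpM2l // ltW.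
under eq_bigr do rewrite mulr_sumr.
rewrite (exchange_big_dep xpredT) //=.
have -> : \sum_(j < n.+1) \sum_i nu i * G i (a j) = \sum_(j < n.+1) Gform G nu nu.
  apply: eq_bigr => j _; rewrite -(pot_const nu sG pp eq (a j)) /Gpt.
  by apply: eq_bigr => y _; rewrite sG mulrC.
by rewrite sumr_const card_ord mulr_natl.
Qed.

Lemma SS_le (nu : T -> R) a n : symmetric_kernel G ->
  is_prob_pos nu -> equilibrium G nu -> leja G a ->
  SS a n <= n%:R * diag_max G + n%:R * (n%:R - 1) * Gform G nu nu.
Proof.
move=> sG pp eq lj.
elim: n => [|n IH]; first by rewrite /SS big_ord0 !mul0r addr0.
rewrite SS_rec //.
have := U_le nu a n sG pp eq lj; have := diag_le (a n).
rewrite -natr1; lra.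
Qed.


Lemma part1 (nu : T -> R) a n : symmetric_kernel G ->
  is_prob_pos nu -> equilibrium G nu -> leja G a -> (1 <= n)%N ->
  Gform G (fun x => emp_meas R a n x - nu x) (fun x => emp_meas R a n x - nu x)
     <= n%:R^-1 * (diag_max G - Gform G nu nu).
Proof.
move=> sG pp eq lj n1.
have m0 : 0 < n%:R :> R by rewrite ltr0n.
have mne : n%:R != 0 :> R by rewrite gt_eqF.
rewrite GformBl !GformBr.
have hsn : Gform G (emp_meas R a n) nu = Gform G nu nu.
  rewrite Gform_emp_l; under eq_bigr do rewrite (pot_const nu sG pp eq).
  by rewrite sumr_const card_ord -[X in _ * X]mulr_natr mulrCA mulVf // mulr1.
have hns : Gform G nu (emp_meas R a n) = Gform G nu nu by rewrite Gform_sym.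
have hss : Gform G (emp_meas R a n) (emp_meas R a n) = n%:R^-1 * (n%:R^-1 * SS a n).
  rewrite Gform_emp_l; under eq_bigr do rewrite Gpt_emp; by rewrite -mulr_sumr.
rewrite hsn hns hss.
have hS := SS_le nu a n sG pp eq lj.
set m := n%:R in m0 mne hS *.
set S := SS a n in hS *.
set M := diag_max G in hS *.
set W := Gform G nu nu in hS *.
have h1 : m^-1 * (m^-1 * S) <= m^-1 * (m^-1 * (m * M + m * (m - 1) * W)).
  by rewrite !ler_pM2l ?invr_gt0.
have h2 : m^-1 * (m^-1 * (m * M + m * (m - 1) * W)) = m^-1 * (M - W) + W.
  by field.
lra.
Qed.


Lemma cvg_sumR (I : Type) (r : seq I) (P : pred I) (f : I -> nat -> R) (l : I -> R) :
  (forall i, f i @ \oo --> l i) ->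
  (fun n => \sum_(i <- r | P i) f i n) @ \oo --> \sum_(i <- r | P i) l i.
Proof.
move=> hf; elim: r => [|i r IH].
  under eq_cvg do rewrite big_nil.
  rewrite big_nil; exact: cvg_cst.
under eq_cvg do rewrite big_cons.
rewrite big_cons; case: (P i) => //.
exact: cvgD.
Qed.

Lemma emp_ge0 (a : nat -> T) n x : 0 <= emp_meas R a n x.
Proof.
rewrite /emp_meas mulr_ge0 ?invr_ge0 ?ler0n //.
by apply: sumr_ge0 => j _; rewrite /dirac_pt ler0n.
Qed.

Lemma part2 (nu : T -> R) a (phi : nat -> nat) (mu : T -> R) : symmetric_kernel G ->
  is_prob_pos nu -> equilibrium G nu -> leja G a ->
  (forall k, (phi k < phi k.+1)%N) ->
  (forall x : T, (fun k => emp_meas R a (phi k) x) @ \oo --> mu x) ->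
  equilibrium G mu.
Proof.
move=> sG pp eq lj hinc hcv0.
have hphi : forall k, (k <= phi k)%N.
  elim => [|k IH] //; exact: leq_ltn_trans IH (hinc k).
pose psi k := phi k.+1.
have hpsi : forall k, (k.+1 <= psi k)%N.
  by move=> k; rewrite /psi; exact: leq_ltn_trans (hphi k) (hinc k).
have hcv : forall x, (fun k => emp_meas R a (psi k) x) @ \oo --> mu x.
  by move=> x; have := hcv0 x; rewrite -cvg_shiftS.
have mu0 : forall x, 0 <= mu x.
  move=> x; apply: (ler_cvg_to (cvg_cst 0) (hcv x)).
  by apply: nearW => k; exact: emp_ge0.
have hs := @cvg_sumR T (index_enum T) xpredT _ _ hcv.
have hs1 : (fun k => \sum_(x <- index_enum T | xpredT x) emp_meas R a (psi k) x)
            = fun _ => 1.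
  by apply: funext => k; rewrite sum_emp // (leq_trans _ (hpsi k)).
rewrite hs1 in hs.
have musum : \sum_x mu x = 1.
  apply/le_anti/andP; split.
    by apply: (ler_cvg_to hs (cvg_cst (1:R))); apply: nearW.
  by apply: (ler_cvg_to (cvg_cst (1:R)) hs); apply: nearW.
have pmu : is_prob mu by [].
set C := diag_max G - Gform G nu nu.
pose q f := Gform G (fun x => f x - nu x) (fun x => f x - nu x).
have hq : (fun k => q (emp_meas R a (psi k))) @ \oo --> q mu.
  rewrite /q /Gform; apply: cvg_sumR => x; apply: cvg_sumR => y.
  apply: cvgM; first apply: cvgM; first exact: cvg_cst.
    exact: cvgB (hcv x) (cvg_cst _).
  exact: cvgB (hcv y) (cvg_cst _).
have hh : (fun k => harmonic k * `|C|) @ \oo --> 0.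
  rewrite -(mul0r `|C|); apply: cvgM; [exact: cvg_harmonic|exact: cvg_cst].
have qmu : q mu <= 0.
  apply: (ler_cvg_to hq hh); apply: nearW => k.
  apply: le_trans (part1 nu a (psi k) sG pp eq lj _) _.
    exact: leq_trans _ (hpsi k).
  rewrite -/C mulrC; apply: le_trans (ler_norm _) _.
  rewrite normrM mulrC ler_wpM2r // /= normrV ?unitfE ?pnatr_eq0 -?lt0n
     ?(leq_trans _ (hpsi k)) // normr_nat.
  by rewrite lef_pV2 ?posrE ?ltr0n ?(leq_trans _ (hpsi k)) // ler_nat.
split => // la pla.
apply: le_trans (eq.2 la pla).
have : q mu = Gform G mu mu - Gform G nu nu.
  rewrite /q GformBl !GformBr.
  have hmn : Gform G mu nu = Gform G nu nu.
    rewrite GformE; under eq_bigr do rewrite (pot_const nu sG pp eq).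
    by rewrite -mulr_suml musum mul1r.
  by rewrite hmn Gform_sym // hmn; ring.
lra.
Qed.

End Helpers.

Theorem theorem5p1 (R : realType) (T : finType) (G : T -> T -> R)
  (nustar : T -> R) (a : nat -> T) :
  symmetric_kernel G -> cond_psd G ->
  is_prob_pos nustar -> equilibrium G nustar ->
  leja G a ->
  (forall n : nat, (1 <= n)%N ->
     Gform G (fun x => emp_meas R a n x - nustar x)
             (fun x => emp_meas R a n x - nustar x)
     <= n%:R^-1 * (diag_max G - Gform G nustar nustar))
  /\
  (forall (phi : nat -> nat) (mu : T -> R),
     (forall k, (phi k < phi k.+1)%N) ->
     (forall x : T, (fun k => emp_meas R a (phi k) x) @ \oo --> mu x) ->
     equilibrium G mu).
Proof.
move=> sG _ pp eq lj; split.
  by move=> n n1; exact: part1.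
by move=> phi mu hinc hcv; exact: (@part2 R T G nustar a phi mu sG pp eq lj hinc hcv).
Qed.
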